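(* The number of occurrences of the endhered pattern $21$ (resp. $12$) in a uniformly random matching of size $n$ converges in distribution, as $n\to\infty$, to a Poisson law with parameter $1/2$; precisely, for every fixed $k\ge0$, $$\frac{a_{n,k}}{(2n-1)!!}\to\frac{e^{-1/2}}{2^k k!}\qquad(n\to\infty),$$ where $a_{n,k}$ is the number of matchings of size $n$ with exactly $k$ occurrences of the pattern.
   Context: A matching of size $n$ is a set of $n$ arcs $(a,b)$ with $1\le a<b\le 2n$ such that each point of $\{1,\dots,2n\}$ belongs to exactly one arc; there are $(2n-1)!!$ of them. An occurrence of the endhered pattern $21$ in a matching is a pair of arcs of the form $(i+1,j+2),(i+2,j+1)$; an occurrence of $12$ is a pair of arcs of the form $(i+1,j+1),(i+2,j+2)$. The number of occurrences is the number of such pairs. *)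

(* Defs.v *)
From mathcomp Require Import all_boot.
Set Implicit Arguments. Unset Strict Implicit. Unset Printing Implicit Defensive.

(* Points {1,...,2n} are represented 0-based as 'I_(2n) (point p <-> p+1). *)
Definition is_matching (n : nat) (M : {set 'I_(2 * n) * 'I_(2 * n)}) : bool :=
  [forall e in M, (e.1 < e.2)%N] &&
  [forall x : 'I_(2 * n), #|[set e in M | (e.1 == x) || (e.2 == x)]| == 1].

Definition has_arc n (M : {set 'I_(2 * n) * 'I_(2 * n)}) (a b : nat) : bool :=
  [exists e in M, (val e.1 == a) && (val e.2 == b)].

Inductive pattern := P21 | P12.

(* Occurrences: 21 = arcs (i+1,j+2),(i+2,j+1); 12 = arcs (i+1,j+1),(i+2,j+2)
   (1-based).
   Each occurrence (an unordered pair of arcs) is determined by (i,j). *)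
Definition occ_at (p : pattern) n (M : {set 'I_(2 * n) * 'I_(2 * n)}) (i j : nat) : bool :=
  match p with
  | P21 => has_arc M i j.+1 && has_arc M i.+1 j
  | P12 => has_arc M i j && has_arc M i.+1 j.+1
  end.

Definition occurrences (p : pattern) n (M : {set 'I_(2 * n) * 'I_(2 * n)}) : nat :=
  #|[set q : 'I_(2 * n) * 'I_(2 * n) | occ_at p M q.1 q.2]|.

Definition a_count (p : pattern) (n k : nat) : nat :=
  #|[set M : {set 'I_(2 * n) * 'I_(2 * n)} | is_matching M && (occurrences p M == k)]|.

(* (2n-1)!! = 1 * 3 * ... * (2n-1) *)
Definition dfact (n : nat) : nat := \prod_(i < n) (2 * i + 1).

(* Main.v *)
Require Import Defs.
From Stdlib Require Import Reals Factorial.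
Open Scope R_scope.
From Stdlib Require Import Lra.
From Coquelicot Require Import Coquelicot.
From mathcomp Require Import all_boot zify.

(* Proof strategy: method of factorial moments with a "chain-start" modification Y of
   the occurrence count X, Bonferroni inequalities, and explicit asymptotics. *)

Open Scope nat_scope.
Set Implicit Arguments. Unset Strict Implicit. Unset Printing Implicit Defensive.


Lemma sum_bool (T:finType) (D:pred T) (P : pred T) :
  (\sum_(x in D) (P x : nat) = #|[set x in D | P x]|)%N.
Proof. rewrite -sum1dep_card big_mkcondr /=. apply: eq_bigr => x _. by case: (P x). Qed.

Lemma dfactS m : dfact m.+1 = (dfact m * (2 * m + 1))%N.
Proof. by rewrite /dfact big_ord_recr. Qed.

Section PM.
Variable n : nat.
Local Notation T := 'I_(2 * n).
Local Notation E := (T * T)%type.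

Definition touches (e : E) (x : T) := (e.1 == x) || (e.2 == x).
Definition deg (M : {set E}) x := #|[set e in M | touches e x]|.

Definition pm (U : {set T}) (M : {set E}) :=
  [forall e in M, [&& e.1 < e.2, e.1 \in U & e.2 \in U]] && [forall x in U, deg M x == 1].
Definition pmp (U : {set T}) (A : {set E}) :=
  [forall e in A, [&& e.1 < e.2, e.1 \in U & e.2 \in U]] && [forall x in U, deg A x <= 1].

Lemma deg_setU1 (a : E) (B : {set E}) (x : T) : a \notin B -> deg (a |: B) x = (touches a x + deg B x)%N.
Proof.
move=> aB; rewrite /deg.
have -> : [set e in a |: B | touches e x] =
  if touches a x then a |: [set e in B | touches e x] else [set e in B | touches e x].
  apply/setP => e; case: ifP => ht; rewrite !inE; case: eqP => [->|] //=; by rewrite ?ht ?andbF.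
case: ifP => ht //. by rewrite cardsU1 inE (negbTE aB).
Qed.

Lemma deg_setD1 (a : E) (M : {set E}) (x : T) : a \in M -> deg M x = (touches a x + deg (M :\ a) x)%N.
Proof.
move=> aM; rewrite -deg_setU1 ?setD11 //. by rewrite setD1K.
Qed.

Lemma deg_sub (A M : {set E}) (x : T) : A \subset M -> deg A x <= deg M x.
Proof.
move=> AM; apply: subset_leq_card; apply/subsetP => e; rewrite !inE => /andP[eA ->].
by rewrite (subsetP AM).
Qed.

Lemma deg2 (M : {set E}) (e a : E) (x : T) : e \in M -> a \in M -> e != a -> touches e x -> touches a x -> 1 < deg M x.
Proof.
move=> eM aM nea te ta; rewrite /deg.
have : [set e; a] \subset [set e0 in M | touches e0 x].
  by apply/subsetP => y; rewrite !inE => /orP[]/eqP->; rewrite ?eM ?aM ?te ?ta.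
move/subset_leq_card; by rewrite cards2 nea.
Qed.

Section Step.
Variables (U : {set T}) (a : E).
Hypotheses (a12 : a.1 < a.2) (a1U : a.1 \in U) (a2U : a.2 \in U).
Let U' := U :\: [set a.1; a.2].

Lemma notin_U' (e : E) (M : {set E}) x : e \in M -> a \in M -> e != a -> x \in U -> deg M x <= 1 ->
  touches e x -> touches a x -> False.
Proof. move=> eM aM nea xU dx te ta. have := deg2 eM aM nea te ta. by rewrite ltnNge dx. Qed.

Lemma pmp_step (A : {set E}) : pmp U A -> a \in A -> pmp U' (A :\ a).
Proof.
case/andP => /forall_inP H1 /forall_inP H2 aA; apply/andP; split.
  apply/forall_inP => e; rewrite !inE => /andP[nea eA].
  case/and3P: (H1 e eA) => -> e1 e2 /=.
  have nt : forall x, x \in U -> touches e x -> touches a x -> False.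
    move=> x xU te ta. exact: (notin_U' eA aA nea xU (H2 x xU) te ta).
  rewrite e1 e2 !andbT; apply/andP; split; apply/negP => /orP[]/eqP ex.
  - by apply: (nt _ e1); rewrite /touches ?ex eqxx ?orbT.
  - by apply: (nt _ e1); rewrite /touches ?ex eqxx ?orbT.
  - by apply: (nt _ e2); rewrite /touches ?ex eqxx ?orbT.
  - by apply: (nt _ e2); rewrite /touches ?ex eqxx ?orbT.
apply/forall_inP => x; rewrite !inE => /andP[_ xU].
apply: leq_trans (H2 x xU); apply: deg_sub; exact: subsetDl.
Qed.

Lemma pm_step (M : {set E}) : pm U M -> a \in M -> pm U' (M :\ a).
Proof.
case/andP => /forall_inP H1 /forall_inP H2 aM.
have : pmp U M.
  apply/andP; split; first exact/forall_inP.
  by apply/forall_inP => x xU; rewrite (eqP (H2 x xU)).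
move/pmp_step => /(_ aM) /andP[h _]; apply/andP; split => //.
apply/forall_inP => x; rewrite !inE => /andP[xa xU].
have := H2 x xU; rewrite (deg_setD1 x aM) /touches.
have -> : (a.1 == x) = false by apply/negP => /eqP ex; move: xa; rewrite ex eqxx.
have -> : (a.2 == x) = false by apply/negP => /eqP ex; move: xa; rewrite ex eqxx orbT.
by [].
Qed.

Lemma pm_unstep (B : {set E}) : pm U' B -> pm U (a |: B) /\ a \notin B.
Proof.
case/andP => /forall_inP H1 /forall_inP H2.
have aB : a \notin B.
  apply/negP => /H1 /and3P[_]; by rewrite !inE eqxx.
split => //; apply/andP; split.
  apply/forall_inP => e; rewrite !inE => /orP[/eqP ->|eB]; first by rewrite a12 a1U a2U.
  case/and3P: (H1 e eB) => -> ; rewrite !inE => /andP[_ ->] /andP[_ ->]. by [].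
apply/forall_inP => x xU; rewrite deg_setU1 //.
case xa: (x \in [set a.1; a.2]).
  have -> : deg B x = 0.
    apply/eqP; rewrite cards_eq0; apply/eqP/setP => e; rewrite !inE.
    apply/negP => /andP[eB te]; case/and3P: (H1 e eB) => _ /setDP[_ h1] /setDP[_ h2].
    by case/orP: te => /eqP ex; [move: h1 | move: h2]; rewrite ex xa.
  move: xa; rewrite !inE /touches => /orP[]/eqP ->; by rewrite eqxx ?orbT.
have xU' : x \in U' by apply/setDP; rewrite xa.
rewrite (eqP (H2 x xU')).
move: xa; rewrite !inE /touches => /norP[h1 h2].
by rewrite (eq_sym a.1) (negbTE h1) (eq_sym a.2) (negbTE h2).
Qed.

Lemma card_step (Q : pred {set E}) :
  #|[set M | [&& pm U M, a \in M & Q M]]| = #|[set B | pm U' B && Q (a |: B)]|.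
Proof.
have -> : [set M | [&& pm U M, a \in M & Q M]] = (fun B => a |: B) @: [set B | pm U' B && Q (a |: B)].
  apply/setP => M; rewrite inE; apply/idP/imsetP.
  - case/and3P => pM aM QM; exists (M :\ a); last by rewrite setD1K.
    by rewrite inE pm_step //= setD1K.
  - case => B; rewrite inE => /andP[pB QB] ->.
    by case: (pm_unstep pB) => -> _; rewrite setU11 QB.
apply: card_in_imset => B1 B2; rewrite !inE => /andP[p1 _] /andP[p2 _] e.
by rewrite -(setU1K (pm_unstep p1).2) e setU1K // (pm_unstep p2).2.
Qed.

Lemma card_U' : #|U'| = (#|U| - 2)%N.
Proof.
rewrite cardsD; congr (_ - _)%N.
have -> : U :&: [set a.1; a.2] = [set a.1; a.2].
  apply/setIidPr; apply/subsetP => x; rewrite !inE => /orP[]/eqP->; by [].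
by rewrite cards2; case: eqP => // h; move: a12; rewrite h ltnn.
Qed.

End Step.

Lemma pm0 (M : {set E}) : pm set0 M = (M == set0).
Proof.
apply/idP/eqP => [/andP[/forall_inP H _]|->].
  apply/setP => e; rewrite inE; apply/negP => /H /and3P[_]; by rewrite inE.
by apply/andP; split; apply/forall_inP => x; rewrite inE.
Qed.

Lemma card_pm m (U : {set T}) : #|U| = (2 * m)%N -> #|[set M | pm U M]| = dfact m.
Proof.
elim: m U => [|m IH] U hU.
  rewrite muln0 in hU; rewrite (cards0_eq hU).
  have -> : [set M | pm set0 M] = [set set0] by apply/setP => M; rewrite !inE pm0.
  by rewrite cards1 /dfact big_ord0.
have : 0 < #|U| by rewrite hU; lia.
case/card_gt0P => u0 u0U.
pose u := [arg min_(x < u0 in U) val x].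
have [uU umin] : u \in U /\ forall x, x \in U -> u <= x.
  rewrite /u; case: arg_minnP => // x xU H; split => // y yU; exact: H.
have -> : #|[set M | pm U M]| =
   (\sum_(v in U :\ u) #|[set M | [&& pm U M, (u, v) \in M & true]]|)%N.
  rewrite (eq_bigr (fun v => \sum_(M | pm U M) ((u,v) \in M : nat))); last first.
    move=> v _; rewrite -sum1dep_card big_mkcondr /=; apply: eq_bigr => M _.
    by rewrite andbT; case: (_ \in _).
  rewrite exchange_big /= -sum1dep_card; apply: eq_bigr => M pM.
  rewrite sum_bool.
  case/andP: pM => /forall_inP H1 /forall_inP H2.
  apply: (@eq_trans _ _ (deg M u)); first by rewrite (eqP (H2 u uU)).
  rewrite /deg.
  have -> : [set e in M | touches e u] = (pair u) @: [set v in U :\ u | (u,v) \in M].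
    apply/setP => e; rewrite inE; apply/idP/imsetP.
    - case/andP => eM te; case/and3P: (H1 e eM) => lt e1 e2.
      case/orP: te => /eqP eu.
      + exists e.2; last by rewrite -eu; case: (e).
        rewrite !inE e2 andbT; apply/andP; split.
          by apply/negP => /eqP h; move: lt; rewrite eu h ltnn.
        by rewrite -eu; case: (e) eM.
      + have := umin _ e1; by rewrite -eu leqNgt lt.
    - case => v; rewrite !inE => /andP[_ uvM] ->; by rewrite uvM /touches eqxx.
  rewrite card_imset //; by move=> x y [].
under eq_bigr => v vU.
  have hv : u < v.
    move: vU; rewrite !inE => /andP[nvu vU]; rewrite ltn_neqAle umin // andbT.
    by apply/negP => /eqP h; move: nvu; rewrite -(inj_eq val_inj) /= h eqxx.
  rewrite (@card_step U (u,v)) //=; last by move: vU; rewrite inE => /andP[].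
  rewrite (_ : [set B | pm _ B && true] = [set B | pm (U :\: [set (u,v).1; (u,v).2]) B]); last first.
    by apply/setP => B; rewrite !inE andbT.
  rewrite (@IH _); last first.
    rewrite (@card_U' U (u,v)) //=; last by move: vU; rewrite inE => /andP[].
    rewrite hU; lia.
  over.
rewrite sum_nat_const dfactS mulnC; congr (_ * _)%N.
rewrite (cardsD1 u) uU in hU; lia.
Qed.

Lemma card_pm_sub k m (U : {set T}) (A : {set E}) : #|A| = k -> #|U| = (2 * m)%N -> pmp U A ->
  #|[set M | pm U M && (A \subset M)]| = dfact (m - k).
Proof.
elim: k m U A => [|k IH] m U A hA hU pA.
  rewrite (cards0_eq hA) subn0 -(card_pm hU); apply: eq_card => M; by rewrite !inE sub0set andbT.
have : 0 < #|A| by rewrite hA.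
case/card_gt0P => a aA.
case/andP: (pA) => /forall_inP H1 _; case/and3P: (H1 a aA) => a12 a1U a2U.
have -> : [set M | pm U M && (A \subset M)] = [set M | [&& pm U M, a \in M & A \subset M]].
  apply/setP => M; rewrite !inE; case: (pm U M) => //=.
  case AM: (A \subset M); last by rewrite andbF.
  by rewrite (subsetP AM).
rewrite card_step //.
have -> : [set B | pm (U :\: [set a.1; a.2]) B && (A \subset a |: B)] =
          [set B | pm (U :\: [set a.1; a.2]) B && (A :\ a \subset B)] by
  apply/setP => B; rewrite !inE subDset.
have hU2 : 2 <= #|U|.
  have : [set a.1; a.2] \subset U by apply/subsetP => x; rewrite !inE => /orP[]/eqP->.
  move/subset_leq_card; rewrite cards2.
  by case: eqP => // h; move: a12; rewrite h ltnn.
rewrite (IH (m.-1)) //.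
- congr dfact; lia.
- move: hA; rewrite (cardsD1 a) aA; lia.
- rewrite card_U' // hU. rewrite hU in hU2. lia.
- exact: pmp_step.
Qed.

End PM.

Lemma is_matching_pm n (M : {set 'I_(2*n) * 'I_(2*n)}) : is_matching M = pm setT M.
Proof.
rewrite /is_matching /pm; congr (_ && _).
  apply: eq_forallb => e; by rewrite !inE !andbT.
apply: eq_forallb => x; by rewrite !inE.
Qed.

Lemma count_match n (A : {set 'I_(2*n) * 'I_(2*n)}) :
  pmp setT A -> #|[set M | is_matching M && (A \subset M)]| = dfact (n - #|A|).
Proof.
move=> pA; rewrite -(@card_pm_sub n #|A| n setT A) //; last by rewrite cardsT card_ord.
apply: eq_card => M; by rewrite !inE is_matching_pm.
Qed.

Lemma count_match_le n (A : {set 'I_(2*n) * 'I_(2*n)}) :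
  #|[set M | is_matching M && (A \subset M)]| <= dfact (n - #|A|).
Proof.
case: (boolP (pmp setT A)) => [pA|npA]; first by rewrite count_match.
suff -> : [set M | is_matching M && (A \subset M)] = set0 by rewrite cards0.
apply/setP => M; rewrite !inE; apply/negP => /andP[]; rewrite is_matching_pm => /andP[/forall_inP H1 /forall_inP H2] AM.
move/negP: npA; apply; apply/andP; split.
  apply/forall_inP => e eA; exact: H1 (subsetP AM e eA).
apply/forall_inP => x _; rewrite -(eqP (H2 x (in_setT x))); exact: deg_sub.
Qed.


Section Sites.
Variables (p : pattern) (n : nat).
Local Notation T := 'I_(2 * n).
Local Notation E := (T * T)%type.

Definition arc1 (i j : nat) : nat * nat := if p is P21 then (i, j.+1) else (i, j).
Definition arc2 (i j : nat) : nat * nat := if p is P21 then (i.+1, j) else (i.+1, j.+1).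
Definition pj (j : nat) := if p is P21 then j.+1 else j.-1.
Definition earc (c : nat * nat) : {set E} := [set e : E | (nat_of_ord e.1, nat_of_ord e.2) == c].
Definition sarcs (s : E) : {set E} := earc (arc1 s.1 s.2) :|: earc (arc2 s.1 s.2).
Definition parc (s : E) : {set E} := earc (arc1 s.1.-1 (pj s.2)).
Definition valid (s : E) := (s.1 + 2 <= s.2) && (s.2.+1 < 2 * n).
Definition present (M : {set E}) (s : E) := occ_at p M s.1 s.2.
Definition ppres (M : {set E}) (s : E) := (0 < s.1) && occ_at p M s.1.-1 (pj s.2).
Definition Ys (M : {set E}) := [set s | present M s && ~~ ppres M s].
Definition far4 (x y : nat) := (x + 3 < y) || (y + 3 < x).
Definition sep (s s' : E) := [&& far4 s.1 s'.1, far4 s.1 s'.2, far4 s.2 s'.1 & far4 s.2 s'.2].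

Lemma occ_atE (M : {set E}) i j : occ_at p M i j =
  has_arc M (arc1 i j).1 (arc1 i j).2 && has_arc M (arc2 i j).1 (arc2 i j).2.
Proof. by rewrite /arc1 /arc2; case: p. Qed.

Lemma has_arcE (M : {set E}) c : has_arc M c.1 c.2 = (earc c :&: M != set0).
Proof.
case: c => a b; rewrite /has_arc; apply/existsP/set0Pn => [[e /andP[eM h]]|[e he]]; exists e.
  by rewrite !inE eM andbT xpair_eqE.
by move: he; rewrite !inE xpair_eqE => /andP[-> ->].
Qed.

Lemma earc_le1 c : #|earc c| <= 1.
Proof.
apply/card_le1_eqP => [[x1 x2] [y1 y2]]; rewrite !inE /= => /eqP h1 /eqP h2.
rewrite -h2 in h1; case: h1 => a b; congr pair; exact: val_inj.
Qed.

Lemma earc_eq c (e e' : E) : e \in earc c -> e' \in earc c -> e = e'.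
Proof. move=> h h'; exact: (card_le1_eqP (earc_le1 c)). Qed.

Lemma has_arc_sub (M : {set E}) c : has_arc M c.1 c.2 -> (earc c \subset M) && (earc c != set0).
Proof.
rewrite has_arcE => /set0Pn[e]; rewrite inE => /andP[ec eM].
apply/andP; split; last by apply/set0Pn; exists e.
apply/subsetP => e' e'c; by rewrite (earc_eq e'c ec).
Qed.

Lemma earc_in c (h1 : c.1 < 2 * n) (h2 : c.2 < 2 * n) :
  earc c = [set ((Ordinal h1, Ordinal h2) : E)].
Proof.
apply/setP => e; rewrite !inE; apply/eqP/eqP => [h|->]; last exact: (esym (surjective_pairing c)).
case: e h => x y /= h; congr pair; apply: val_inj => /=; by rewrite -h.
Qed.

Lemma set1I_neq0 (x : E) (A : {set E}) : ([set x] :&: A != set0) = (x \in A).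
Proof.
apply/set0Pn/idP => [[y]|xA]; first by rewrite !inE => /andP[/eqP ->].
by exists x; rewrite !inE eqxx.
Qed.

Lemma valid_ranges (s : E) : valid s ->
  [/\ (arc1 s.1 s.2).1 < 2 * n, (arc1 s.1 s.2).2 < 2 * n,
      (arc2 s.1 s.2).1 < 2 * n & (arc2 s.1 s.2).2 < 2 * n].
Proof. rewrite /valid /arc1 /arc2 => h; case: p => /=; split; lia. Qed.

Lemma present_sub (M : {set E}) s : valid s -> present M s = (sarcs s \subset M).
Proof.
move=> vs; case: (valid_ranges vs) => h1 h2 h3 h4.
rewrite /present occ_atE !has_arcE (earc_in h1 h2) (earc_in h3 h4) !set1I_neq0.
by rewrite /sarcs (earc_in h1 h2) (earc_in h3 h4) subUset !sub1set.
Qed.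

Lemma card_sarcs (s : E) : valid s -> #|sarcs s| = 2.
Proof.
move=> vs; case: (valid_ranges vs) => h1 h2 h3 h4.
rewrite /sarcs (earc_in h1 h2) (earc_in h3 h4) cards2.
suff -> : ((Ordinal h1, Ordinal h2) : E) != (Ordinal h3, Ordinal h4) by [].
apply/negP => /eqP [] ; rewrite /arc1 /arc2; case: p => /=; lia.
Qed.

Lemma in_sarcs (s e : E) : (e \in sarcs s) =
  ((nat_of_ord e.1, nat_of_ord e.2) == arc1 s.1 s.2) || ((nat_of_ord e.1, nat_of_ord e.2) == arc2 s.1 s.2).
Proof. by rewrite !inE. Qed.

Lemma in_parc (s e : E) : (e \in parc s) = ((nat_of_ord e.1, nat_of_ord e.2) == arc1 s.1.-1 (pj s.2)).
Proof. by rewrite !inE. Qed.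

Lemma matching_valid (M : {set E}) s : is_matching M -> present M s -> valid s.
Proof.
move=> mM; have mM' := mM; case/andP: mM' => /forall_inP H1 /forallP H2.
rewrite /present occ_atE => /andP[/has_arc_sub/andP[s1 /set0Pn[e1 e1c]] /has_arc_sub/andP[s2 /set0Pn[e2 e2c]]].
have e1M := subsetP s1 _ e1c; have e2M := subsetP s2 _ e2c.
have l1 := H1 _ e1M; have l2 := H1 _ e2M.
move: e1c e2c; rewrite !inE => /eqP c1 /eqP c2.
have o1 := ltn_ord e1.2; have o2 := ltn_ord e2.2.
rewrite /valid.
move: c1 c2; rewrite /arc1 /arc2; case: p => /= [] [c11 c12] [c21 c22].
  by move: l1 l2 o1 o2 c11 c12 c21 c22; case: (e1) => [x1 y1]; case: (e2) => [x2 y2] /=; lia.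
case: (eqVneq (nat_of_ord s.2) (s.1.+1)) => hj.
  2: by move: l1 l2 o1 o2 c11 c12 c21 c22; case: (e1) => [x1 y1]; case: (e2) => [x2 y2] /=; lia.
exfalso.
have ne : e1 != e2 by apply/negP => /eqP h; move: c11 c21; rewrite h; lia.
have t1 : touches e1 e1.2 by rewrite /touches eqxx orbT.
have t2 : touches e2 e1.2 by rewrite /touches; apply/orP; left; apply/eqP/ord_inj; by rewrite c21 c12 hj.
have := deg2 e1M e2M ne t1 t2; by rewrite /deg (eqP (H2 _)).
Qed.

Definition in_s (i j a b : nat) := ((a, b) == arc1 i j) || ((a, b) == arc2 i j).
Definition sepn (i j i' j' : nat) := [&& far4 i i', far4 i j', far4 j i' & far4 j j'].

Lemma ar_K1 i j i' j' a b : in_s i j a b -> in_s i' j' a b ->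
  (i = i' /\ j = j') \/ (0 < i /\ i' = i.-1 /\ j' = pj j) \/ (0 < i' /\ i = i'.-1 /\ j = pj j').
Proof. rewrite /in_s /arc1 /arc2 /pj; case: p; rewrite !xpair_eqE; lia. Qed.

Lemma ar_same i j a b a' b' x : i + 2 <= j -> in_s i j a b -> in_s i j a' b' ->
  (x == a) || (x == b) -> (x == a') || (x == b') -> (a = a') /\ (b = b').
Proof. rewrite /in_s /arc1 /arc2; case: p; rewrite !xpair_eqE; lia. Qed.

Lemma ar_sep i j i' j' a b a' b' x : sepn i j i' j' -> in_s i j a b -> in_s i' j' a' b' ->
  (x == a) || (x == b) -> (x == a') || (x == b') -> False.
Proof. rewrite /sepn /far4 /in_s /arc1 /arc2; case: p; rewrite !xpair_eqE; lia. Qed.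

Lemma ar_ord i j a b : i + 2 <= j -> in_s i j a b -> a < b.
Proof. rewrite /in_s /arc1 /arc2; case: p; rewrite !xpair_eqE; lia. Qed.

Lemma ar_parc_sep i j i' j' a b : sepn i j i' j' -> (a, b) == arc1 i.-1 (pj j) -> in_s i' j' a b -> False.
Proof. rewrite /sepn /far4 /in_s /arc1 /arc2 /pj; case: p; rewrite !xpair_eqE; lia. Qed.

Lemma ar_parc_self i j a b : i + 2 <= j -> (a, b) == arc1 i.-1 (pj j) -> in_s i j a b -> False.
Proof. rewrite /in_s /arc1 /arc2 /pj; case: p; rewrite !xpair_eqE; lia. Qed.

Lemma in_sarcs_s (s e : E) : (e \in sarcs s) = in_s s.1 s.2 e.1 e.2.
Proof. by rewrite in_sarcs. Qed.

Lemma pair_ord_eq (e e' : E) : (e.1 : nat) = e'.1 -> (e.2 : nat) = e'.2 -> e = e'.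
Proof. case: e e' => [x y] [x' y'] /= h1 h2; congr pair; exact: ord_inj. Qed.

Lemma my_disj (A B : {set E}) : (forall x, x \in A -> x \in B -> False) -> [disjoint A & B].
Proof. move=> H; rewrite -setI_eq0; apply/eqP/setP => x; rewrite !inE; apply/negP => /andP[a b]; exact: H x a b. Qed.

Lemma Ys_disj (M : {set E}) s s' : is_matching M -> s \in Ys M -> s' \in Ys M -> s != s' ->
  [disjoint sarcs s & sarcs s'].
Proof.
move=> mM; rewrite !inE => /andP[ps nps] /andP[ps' nps'] nss.
apply: my_disj => e; rewrite !in_sarcs_s => h h'.
case: (ar_K1 h h') => [[h1 h2]|[[h0 [h1 h2]]|[h0 [h1 h2]]]].
- by move/negP: nss; apply; apply/eqP/pair_ord_eq.
- move/negP: nps; apply; rewrite /ppres h0 /=. move: ps'; by rewrite /present h1 h2.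
- move/negP: nps'; apply; rewrite /ppres h0 /=. move: ps; by rewrite /present h1 h2.
Qed.

Definition goodS (S : {set E}) :=
  [forall s in S, valid s] && [forall s in S, forall s' in S, (s != s') ==> sep s s'].
Definition AS (S : {set E}) := \bigcup_(s in S) sarcs s.

Lemma card_AS (S : {set E}) : (forall s, s \in S -> valid s) ->
  (forall s s', s \in S -> s' \in S -> s != s' -> [disjoint sarcs s & sarcs s']) ->
  #|AS S| = 2 * #|S|.
Proof.
move=> vS dS.
pose F s := if s \in S then sarcs s else set0.
have -> : AS S = \bigcup_s F s by rewrite /AS big_mkcond.
rewrite -sum1_card partition_disjoint_bigcup; last first.
  move=> i j nij; rewrite /F; case: ifP => iS; case: ifP => jS; try (by apply: my_disj => x; rewrite ?in_set0).
  exact: dS.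
rewrite (eq_bigr (fun s => if s \in S then 2 else 0)%N); last first.
  move=> s _; rewrite sum1_card /F; case: ifP => sS; first exact: card_sarcs (vS _ sS).
  by rewrite cards0.
by rewrite -big_mkcond /= sum_nat_const mulnC.
Qed.

Lemma goodS_valid S s : goodS S -> s \in S -> valid s.
Proof. by case/andP => /forall_inP H _; apply: H. Qed.

Lemma goodS_sep S s s' : goodS S -> s \in S -> s' \in S -> s != s' -> sep s s'.
Proof. case/andP => _ /forall_inP H sS s'S; move: (H s sS) => /forall_inP /(_ s' s'S); exact: implyP. Qed.

Lemma card_AS_good S : goodS S -> #|AS S| = 2 * #|S|.
Proof.
move=> gS; apply: card_AS => [s|s s' sS s'S nss]; first exact: goodS_valid.
apply: my_disj => e; rewrite !in_sarcs_s => h h'.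
have := goodS_sep gS sS s'S nss; rewrite /sep => hs.
apply: (@ar_sep s.1 s.2 s'.1 s'.2 e.1 e.2 e.1 e.2 e.1) => //; by rewrite eqxx.
Qed.

Lemma valid_n (s : E) : valid s -> s.1 + 2 <= s.2.
Proof. by case/andP. Qed.

Lemma goodA_pmp S : goodS S -> pmp setT (AS S).
Proof.
move=> gS; apply/andP; split.
  apply/forall_inP => e /bigcupP[s sS]; rewrite in_sarcs_s !in_setT !andbT => h.
  exact: ar_ord (valid_n (goodS_valid gS sS)) h.
apply/forall_inP => x _; apply/card_le1_eqP => e e'; rewrite !inE /touches.
case/andP => /bigcupP[s sS]; rewrite in_sarcs_s => h te.
case/andP => /bigcupP[s' s'S]; rewrite in_sarcs_s => h' te'.
case: (eqVneq s s') => [ess'|nss].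
  rewrite -ess' in h'.
  have t1 : (nat_of_ord x == e.1) || (nat_of_ord x == e.2).
    by move: te; rewrite !(eq_sym _ x) -!(inj_eq (@ord_inj _)).
  have t2 : (nat_of_ord x == e'.1) || (nat_of_ord x == e'.2).
    by move: te'; rewrite !(eq_sym _ x) -!(inj_eq (@ord_inj _)).
  case: (ar_same (valid_n (goodS_valid gS sS)) h h' t1 t2) => a b.
  exact: pair_ord_eq.
exfalso.
have hs := goodS_sep gS sS s'S nss.
apply: (@ar_sep s.1 s.2 s'.1 s'.2 e.1 e.2 e'.1 e'.2 x) => //.
  by move: te; rewrite !(eq_sym _ x) -!(inj_eq (@ord_inj _)).
by move: te'; rewrite !(eq_sym _ x) -!(inj_eq (@ord_inj _)).
Qed.

Lemma parc_disj S s : goodS S -> s \in S -> [disjoint parc s & AS S].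
Proof.
move=> gS sS; apply: my_disj => e; rewrite in_parc => hp /bigcupP[s' s'S].
rewrite in_sarcs_s => h.
case: (eqVneq s s') => [es|nss].
  rewrite -es in h; exact: ar_parc_self (valid_n (goodS_valid gS sS)) hp h.
exact: ar_parc_sep (goodS_sep gS sS s'S nss) hp h.
Qed.

End Sites.


Lemma card_sum (X : finType) (P : pred X) : #|[set x | P x]| = (\sum_x (P x : nat))%N.
Proof. rewrite -sum1dep_card big_mkcond; apply: eq_bigr => x _; by case: (P x). Qed.

Lemma card_cover (X I : finType) (P R : pred X) (D : pred I) (Q : I -> pred X) :
  (forall x, P x -> R x \/ exists2 i, i \in D & Q i x) ->
  #|[set x | P x]| <= #|[set x | R x]| + \sum_(i in D) #|[set x | Q i x]|.
Proof.
move=> H; rewrite !card_sum.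
rewrite (eq_bigr (fun i => \sum_x (Q i x : nat))); last by move=> i _; rewrite card_sum.
rewrite exchange_big /= -big_split /=; apply: leq_sum => x _.
case Px: (P x) => //=; case: (H x Px) => [->|[i iD Qix]] //.
by rewrite (bigD1 i) //= Qix addnCA leq_addr.
Qed.

Lemma sum_cond_const (X : finType) (P Q : pred X) c :
  (\sum_(x | P x) ((Q x : nat) * c) = #|[set x | P x && Q x]| * c)%N.
Proof.
rewrite card_sum big_distrl /= [RHS]big_mkcond /=; rewrite big_mkcond /=.
apply: eq_bigr => x _; by case: (P x); case: (Q x).
Qed.

Section Moments.
Variables (p : pattern) (n : nat).
Local Notation T := 'I_(2 * n).
Local Notation E := (T * T)%type.
Local Notation Ys := (@Ys p n).
Local Notation valid := (@valid n).
Local Notation sarcs := (@sarcs p n).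
Local Notation parc := (@parc p n).
Local Notation present := (@present p n).
Local Notation goodS := (@goodS n).
Local Notation AS := (@AS p n).

Definition Vset := [set s : E | valid s].
Definition mom r := (\sum_(M | is_matching M) 'C(#|Ys M|, r))%N.
Definition NS (S : {set E}) := #|[set M | is_matching M && (S \subset Ys M)]|.

Lemma mom_exch r : mom r = (\sum_(S : {set E} | #|S| == r) NS S)%N.
Proof.
rewrite /mom /NS.
under eq_bigr => M _ do rewrite -cards_draws card_sum.
rewrite exchange_big /= [RHS]big_mkcond /=.
apply: eq_bigr => S _; rewrite card_sum big_mkcond /=.
case: (#|S| == r) => /=; [apply: eq_bigr => M _ | rewrite big1 // => M _];
  by case: (is_matching M); case: (S \subset Ys M).
Qed.

Lemma NS_ub S : NS S <= (S \subset Vset) * dfact (n - 2 * #|S|).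
Proof.
rewrite /NS; case: (eqVneq [set M | is_matching M && (S \subset Ys M)] set0) => [->|/set0Pn [M0]].
  by rewrite cards0.
rewrite inE => /andP[m0 sY].
have vS : forall s, s \in S -> valid s.
  move=> s sS; move: (subsetP sY s sS); rewrite inE => /andP[ps _]; exact: matching_valid m0 ps.
have -> : S \subset Vset by apply/subsetP => s sS; rewrite inE vS.
rewrite mul1n.
have cA : #|AS S| = 2 * #|S|.
  apply: card_AS => // s s' sS s'S nss; apply: (Ys_disj m0) => //; exact: subsetP sY _ _.
rewrite -cA; apply: leq_trans (count_match_le (AS S)).
apply: subset_leq_card; apply/subsetP => M; rewrite !inE => /andP[mM sYM]; rewrite mM /=.
apply/bigcupsP => s sS; move: (subsetP sYM s sS); rewrite inE => /andP[ps _].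
by rewrite -present_sub // vS.
Qed.

Lemma mom_ub r : mom r <= 'C(#|Vset|, r) * dfact (n - 2 * r).
Proof.
rewrite mom_exch -cards_draws.
apply: leq_trans (_ : \sum_(S : {set E} | #|S| == r) ((S \subset Vset) * dfact (n - 2 * r)) <= _)%N.
  apply: leq_sum => S /eqP <-; exact: NS_ub.
rewrite sum_cond_const; apply: leq_mul => //; apply: subset_leq_card; apply/subsetP => S; by rewrite !inE andbC.
Qed.

Lemma NS_lb S : goodS S -> dfact (n - 2 * #|S|) <= NS S + #|S| * dfact (n - 2 * #|S| - 1).
Proof.
move=> gS.
have pA := goodA_pmp p gS; have cA := card_AS_good p gS.
rewrite -cA -(count_match pA).
have Hc : forall M, is_matching M && (AS S \subset M) ->
   is_matching M && (S \subset Ys M) \/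
   exists2 s, s \in S & [&& is_matching M, AS S :|: parc s \subset M & parc s != set0].
  move=> M /andP[mM AM].
  case: (boolP (S \subset Ys M)) => [sY|/subsetPn[s sS nsY]]; first by left; rewrite mM.
  right; exists s => //.
  have vs := goodS_valid gS sS.
  have ps : present M s.
    rewrite present_sub //; apply: subset_trans AM; exact: bigcup_sup.
  move: nsY; rewrite inE ps /= negbK /ppres => /andP[_].
  rewrite occ_atE => /andP[/has_arc_sub /andP[pM pn] _].
  by rewrite mM subUset AM pM pn.
apply: leq_trans (card_cover Hc) _; rewrite leq_add2l cA.
rewrite -[X in (_ <= X * _)%N]sum1_card big_distrl /=; apply: leq_sum => s sS; rewrite mul1n.
case: (eqVneq (parc s) set0) => [->|pn].
  rewrite (_ : [set M | _] = set0) ?cards0 //; apply/setP => M; rewrite !inE; by case: (is_matching M); case: (_ \subset _).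
have c1 : #|parc s| = 1.
  apply/eqP; rewrite eqn_leq earc_le1 /=; by rewrite card_gt0.
have cU : #|AS S :|: parc s| = (2 * #|S|).+1.
  rewrite cardsU c1 cA.
  have -> : AS S :&: parc s = set0.
    apply/disjoint_setI0; rewrite disjoint_sym; exact: parc_disj.
  by rewrite cards0 subn0 addn1.
apply: leq_trans (_ : #|[set M | is_matching M && (AS S :|: parc s \subset M)]| <= _).
  apply: subset_leq_card; apply/subsetP => M; rewrite !inE => /and3P[-> -> _]; by [].
apply: leq_trans (count_match_le _) _; rewrite cU; by rewrite subnS -subn1.
Qed.

Definition badc r := #|[set S : {set E} | (#|S| == r) && ((S \subset Vset) && ~~ goodS S)]|.

Lemma mom_lb r : 'C(#|Vset|, r) * dfact (n - 2 * r) <=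
  mom r + 'C(#|Vset|, r) * (r * dfact (n - 2 * r - 1)) + badc r * dfact (n - 2 * r).
Proof.
have cV : 'C(#|Vset|, r) = #|[set S : {set E} | (#|S| == r) && (S \subset Vset)]|.
  rewrite -cards_draws; apply: eq_card => S; by rewrite !inE andbC.
rewrite cV mom_exch /badc -!sum_cond_const -!big_split /=.
apply: leq_sum => S /eqP cS.
case: (boolP (S \subset Vset)) => sV /=; last by rewrite !mul0n.
rewrite !mul1n.
case: (boolP (goodS S)) => gS /=; last by rewrite mul1n leq_addl.
rewrite mul0n addn0; have := NS_lb gS; by rewrite cS.
Qed.

Definition conf := [set q : E * E | (q.1 != q.2) && ~~ sep q.1 q.2].

Lemma badc_le r : badc r <= (1 < r) * (#|conf| * 'C(#|Vset|, r - 2)).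
Proof.
case: (leqP r 1) => hr.
  rewrite leqn0 cards_eq0; apply/eqP/setP => S; rewrite !inE.
  apply/negP => /and3P[/eqP cS sV /negP]; apply; apply/andP; split.
    apply/forall_inP => s sS; move: (subsetP sV s sS); by rewrite inE.
  apply/forall_inP => s sS; apply/forall_inP => s' s'S; apply/implyP => ns.
  have : #|S| <= 1 by rewrite cS.
  move/card_le1_eqP => /(_ s s' sS s'S) e; by rewrite e eqxx in ns.
rewrite mul1n /badc.
have Hc : forall S : {set E}, (#|S| == r) && ((S \subset Vset) && ~~ goodS S) ->
   pred0 S \/ exists2 q, q \in conf &
     [&& q.1 \in S, q.2 \in S, S \subset Vset & #|S| == r].
  move=> S /and3P[cS sV ngS]; right.
  have : ~~ [forall s in S, forall s' in S, (s != s') ==> sep s s'].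
    apply: contra ngS => h; apply/andP; split => //.
    apply/forall_inP => s sS; move: (subsetP sV s sS); by rewrite inE.
  case/forall_inPn => s sS /forall_inPn [s' s'S]; rewrite negb_imply => /andP[ns nsep].
  by exists (s, s'); rewrite ?inE ?ns ?nsep //= sS s'S sV cS.
apply: leq_trans (card_cover Hc) _.
rewrite (_ : [set x | pred0 x] = set0) ?cards0 ?add0n; last by apply/setP => x; rewrite !inE.
rewrite -sum_nat_const; apply: leq_sum => q; rewrite inE => /andP[nq _].
rewrite -cards_draws.
pose f (S : {set E}) := S :\: [set q.1; q.2].
set D := [set x | _].
have inj : {in D &, injective f}.
  move=> S1 S2; rewrite !inE => /and4P[a1 b1 _ _] /and4P[a2 b2 _ _] e.
  apply/setP => x; case xq: (x \in [set q.1; q.2]).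
    by move: xq; rewrite !inE => /orP[]/eqP ->; rewrite ?a1 ?b1 ?a2 ?b2.
  have := congr1 (fun X : {set E} => x \in X) e; by rewrite /f !in_setD xq.
rewrite -(card_in_imset inj); apply: subset_leq_card; apply/subsetP => B /imsetP[S].
rewrite inE => /and4P[a b sV /eqP cS] ->; rewrite inE; apply/andP; split.
  apply: subset_trans sV; exact: subsetDl.
rewrite cardsD cS.
have -> : S :&: [set q.1; q.2] = [set q.1; q.2].
  apply/setIidPr; apply/subsetP => x; rewrite !inE => /orP[]/eqP ->; by [].
by rewrite cards2 nq.
Qed.

Definition W (a : nat) := [set x : T | ~~ far4 a x].

Lemma card_W a : #|W a| <= 7.
Proof.
pose f (x : T) : 'I_7 := inord (x + 3 - a).
have inj : {in W a &, injective f}.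
  move=> x y; rewrite !inE /far4 => hx hy /(congr1 (@nat_of_ord _)).
  rewrite /f !inordK; [|lia|lia]; move=> h; apply: ord_inj; lia.
by have := @leq_card_in _ _ f (W a) inj; rewrite card_ord.
Qed.

Lemma card_nsep (s : E) : #|[set s' : E | ~~ sep s s']| <= 56 * n.
Proof.
have sub : [set s' : E | ~~ sep s s'] \subset
  (setX (W s.1) setT :|: setX setT (W s.1)) :|: (setX (W s.2) setT :|: setX setT (W s.2)).
  apply/subsetP => [[x y]]; rewrite !inE /sep /=.
  by case: (far4 s.1 x); case: (far4 s.1 y); case: (far4 s.2 x); case: (far4 s.2 y).
apply: leq_trans (subset_leq_card sub) _.
have cU : forall A B : {set E}, #|A :|: B| <= #|A| + #|B|.
  move=> A B; rewrite cardsU; exact: leq_subr.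
apply: leq_trans (cU _ _) _.
apply: leq_trans (leq_add (cU _ _) (cU _ _)) _.
rewrite !cardsX !cardsT !card_ord.
have h1 := card_W s.1; have h2 := card_W s.2.
nia.
Qed.

Lemma conf_le : #|conf| <= 224 * n ^ 3.
Proof.
apply: leq_trans (_ : #|[set q : E * E | ~~ sep q.1 q.2]| <= _).
  apply: subset_leq_card; apply/subsetP => q; rewrite !inE => /andP[_ ->]; by [].
rewrite card_sum -(pair_bigA _ (fun s s' => (~~ sep s s' : nat))) /=.
apply: leq_trans (_ : \sum_(s : E) 56 * n <= _).
  apply: leq_sum => s _; rewrite -card_sum; exact: card_nsep.
by rewrite sum_nat_const card_prod card_ord; nia.
Qed.

End Moments.


Lemma sum_le2 m j : (\sum_(i < m) (i + 2 <= j : nat) = minn m j.-1)%N.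
Proof. elim: m => [|m IH]; first by rewrite big_ord0 min0n. rewrite big_ord_recr /= IH; case: leqP; lia. Qed.

Lemma sum_pred k : (\sum_(j < k.+1) j.-1 = 'C(k, 2))%N.
Proof.
elim: k => [|k IH]; first by rewrite big_ord_recr big_ord0.
by rewrite big_ord_recr /= IH binS bin1.
Qed.

Lemma card_valid n : #|Vset n| = (n.-1 * (2 * n - 3))%N.
Proof.
rewrite /Vset card_sum -(pair_bigA _ (fun i j => (valid (i, j) : nat))) exchange_big /=.
rewrite (eq_bigr (fun j : 'I_(2 * n) => (j.+1 < 2 * n) * j.-1)%N); last first.
  move=> j _; rewrite /valid /=; case: (j.+1 < 2 * n) => /=.
    rewrite (eq_bigr (fun i : 'I_(2 * n) => (i + 2 <= j : nat))); last by move=> i _; rewrite andbT.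
    by rewrite sum_le2 mul1n; have := ltn_ord j; lia.
  by rewrite big1 // => i _; rewrite andbF.
case: n => [|n]; first by rewrite big_ord0.
rewrite -(big_mkord xpredT (fun j => (j.+1 < 2 * n.+1) * j.-1)%N).
have -> : (2 * n.+1 = (2 * n).+2)%N by lia.
rewrite big_nat_recr //= ltnn mul0n addn0.
rewrite (eq_big_nat _ _ (F2 := fun j => j.-1)); last first.
  move=> i hi; have -> : (i.+1 < (2 * n).+2) = true by lia. by rewrite mul1n.
rewrite big_mkord sum_pred bin2.
have -> : ((2 * n) * (2 * n).-1 = (n * (2 * n).-1).*2)%N by rewrite -mul2n mulnA.
by rewrite doubleK /=; congr (_ * _)%N; lia.
Qed.

Section XY.
Variables (p : pattern) (n : nat).
Local Notation T := 'I_(2 * n).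
Local Notation E := (T * T)%type.
Local Notation Ys := (@Ys p n).
Local Notation present := (@present p n).
Local Notation ppres := (@ppres p n).
Local Notation sarcs := (@sarcs p n).
Local Notation parc := (@parc p n).

Definition xyb := [set M : {set E} | is_matching M && [exists s, present M s && ppres M s]].

Lemma Ys_eq (M : {set E}) : ~~ [exists s, present M s && ppres M s] ->
  Ys M = [set s | present M s].
Proof.
move/existsPn => H; apply/setP => s; rewrite !inE.
case ps: (present M s) => //=; move: (H s); by rewrite ps.
Qed.

Lemma cardU_le (X : finType) (A B : {set X}) : #|A :|: B| <= #|A| + #|B|.
Proof. rewrite cardsU; exact: leq_subr. Qed.

Lemma a_le k : a_count p n k <= #|[set M : {set E} | is_matching M && (#|Ys M| == k)]| + #|xyb|.
Proof.
apply: leq_trans (cardU_le _ _); apply: subset_leq_card; apply/subsetP => M.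
rewrite !inE => /andP[mM oM]; rewrite mM /=.
case: (boolP [exists s, present M s && ppres M s]) => h; first by rewrite orbT.
rewrite Ys_eq // orbF; exact: oM.
Qed.

Lemma a_ge k : #|[set M : {set E} | is_matching M && (#|Ys M| == k)]| <= a_count p n k + #|xyb|.
Proof.
apply: leq_trans (cardU_le _ _); apply: subset_leq_card; apply/subsetP => M.
rewrite !inE => /andP[mM oM]; rewrite mM /=.
case: (boolP [exists s, present M s && ppres M s]) => h; first by rewrite orbT.
rewrite orbF; move: oM; rewrite Ys_eq // => h'; exact: h'.
Qed.

Lemma xyb_le : #|xyb| <= 4 * n ^ 2 * dfact (n - 3).
Proof.
have Hc : forall M : {set E}, is_matching M && [exists s, present M s && ppres M s] ->
  pred0 M \/ exists2 s, s \in predT & [&& is_matching M, present M s & ppres M s].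
  move=> M /andP[mM /existsP[s /andP[h1 h2]]]; right; exists s => //; by rewrite mM h1 h2.
apply: leq_trans (card_cover Hc) _.
rewrite (_ : [set x | pred0 x] = set0) ?cards0 ?add0n; last by apply/setP => x; rewrite !inE.
apply: leq_trans (_ : \sum_(s in predT) dfact (n - 3) <= _).
  apply: leq_sum => s _.
  case: (eqVneq [set M | [&& is_matching M, present M s & ppres M s]] set0) => [->|/set0Pn[M0]].
    by rewrite cards0.
  rewrite inE => /and3P[m0 p0 pp0].
  have vs := matching_valid m0 p0.
  move: pp0; rewrite /ppres => /andP[_]; rewrite occ_atE => /andP[/has_arc_sub/andP[_ pn] _].
  have c1 : #|parc s| = 1 by apply/eqP; rewrite eqn_leq earc_le1 /= card_gt0.
  have cU : #|sarcs s :|: parc s| = 3.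
    rewrite cardsU c1 card_sarcs //.
    have -> : sarcs s :&: parc s = set0.
      apply/disjoint_setI0; apply: my_disj => e; rewrite in_sarcs_s in_parc => h h'.
      exact: ar_parc_self (valid_n vs) h' h.
    by rewrite cards0.
  apply: leq_trans (_ : #|[set M | is_matching M && (sarcs s :|: parc s \subset M)]| <= _).
    apply: subset_leq_card; apply/subsetP => M; rewrite !inE => /and3P[mM pM ppM].
    rewrite mM subUset -present_sub // pM /=.
    move: ppM; rewrite /ppres => /andP[_]; rewrite occ_atE => /andP[/has_arc_sub/andP[-> _] _].
    by [].
  by apply: leq_trans (count_match_le _) _; rewrite cU.
rewrite sum_nat_const; apply: leq_mul => //; apply: leq_trans (max_card _) _; rewrite card_prod card_ord; lia.
Qed.

End XY.

Lemma bin_mul3 y k j : ('C(k + j, k) * 'C(y, k + j) = 'C(y, k) * 'C(y - k, j))%N.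
Proof.
case: (leqP (k + j) y) => h; last first.
  rewrite (bin_small h) muln0.
  case: (leqP k y) => h2; last by rewrite (bin_small h2).
  by rewrite (@bin_small (y - k) j) ?muln0 //; lia.
have f1 := @bin_fact (k + j) k (leq_addr _ _).
have f2 := bin_fact h.
have f3 := @bin_fact y k (leq_trans (leq_addr _ _) h).
have f4 := @bin_fact (y - k) j ltac:(lia).
have e1 : (k + j - k = j)%N by lia.
have e2 : (y - k - j = y - (k + j))%N by lia.
rewrite e1 in f1; rewrite e2 in f4.
have pos : (0 < k`! * j`! * (y - (k + j))`!)%N by rewrite !muln_gt0 !fact_gt0.
apply/eqP; rewrite -(eqn_pmul2r pos); apply/eqP.
nia.
Qed.

Lemma alt_sum m t : 0 < m ->
  ((\sum_(j < t.+1 | ~~ odd j) 'C(m, j)) + odd t * 'C(m.-1, t) =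
   (\sum_(j < t.+1 | odd j) 'C(m, j)) + ~~ odd t * 'C(m.-1, t))%N.
Proof.
case: m => // m _ /=.
elim: t => [|t IH]; first by rewrite big_mkcond [in RHS]big_mkcond !big_ord_recr !big_ord0 /= !bin0.
rewrite big_mkcond [X in _ = X + _]big_mkcond big_ord_recr [X in _ = X + _]big_ord_recr /= -!big_mkcond /=.
rewrite binS.
move: IH; case: (odd t) => /=; lia.
Qed.

Lemma bonf y k t : exists X,
  ((y == k) + \sum_(j < t.+1 | odd j) ('C(k + j, k) * 'C(y, k + j)) + ~~ odd t * X =
   \sum_(j < t.+1 | ~~ odd j) ('C(k + j, k) * 'C(y, k + j)) + odd t * X)%N.
Proof.
have e1 : forall P : pred nat, (\sum_(j < t.+1 | P j) ('C(k + j, k) * 'C(y, k + j)) =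
   'C(y, k) * \sum_(j < t.+1 | P j) 'C(y - k, j))%N.
  move=> P; rewrite big_distrr; apply: eq_bigr => j _; exact: bin_mul3.
rewrite (e1 odd) (e1 (fun j => ~~ odd j)).
case: (ltngtP y k) => h.
- exists 0; rewrite (bin_small h) !mul0n; lia.
- exists ('C(y, k) * 'C((y - k).-1, t))%N.
  have := @alt_sum (y - k) t ltac:(lia).
  move=> e; have e' := congr1 (muln 'C(y, k)) e; case: (odd t) e' => /=; nia.
- exists 0; rewrite h subnn binn !mul1n !muln0 !addn0.
  rewrite (eq_bigr (fun j : 'I_t.+1 => (j == 0 :> nat) : nat)); last by move=> j _; rewrite bin0n.
  rewrite [X in _ = X]big_mkcond [X in _ + X = _]big_mkcond !big_ord_recl /=.
  rewrite !big1 //; move=> i _; by case: ifP.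
Qed.

Lemma bonf_even y k t : ~~ odd t ->
  ((y == k) + \sum_(j < t.+1 | odd j) ('C(k + j, k) * 'C(y, k + j)) <=
   \sum_(j < t.+1 | ~~ odd j) ('C(k + j, k) * 'C(y, k + j)))%N.
Proof. move=> ht; case: (bonf y k t) => X; rewrite ht (negbTE ht) /= mul0n addn0 => <-; exact: leq_addr. Qed.

Lemma bonf_odd y k t : odd t ->
  (\sum_(j < t.+1 | ~~ odd j) ('C(k + j, k) * 'C(y, k + j)) <=
   (y == k) + \sum_(j < t.+1 | odd j) ('C(k + j, k) * 'C(y, k + j)))%N.
Proof. move=> ht; case: (bonf y k t) => X; rewrite ht /= mul0n addn0 mul1n => ->; exact: leq_addr. Qed.

Section BS.
Variables (p : pattern) (n : nat).
Local Notation T := 'I_(2 * n).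
Local Notation E := (T * T)%type.
Local Notation Ys := (@Ys p n).

Definition Ycount k := #|[set M : {set E} | is_matching M && (#|Ys M| == k)]|.
Definition Msum k t (P : pred nat) := (\sum_(j < t.+1 | P j) ('C(k + j, k) * mom p n (k + j)))%N.

Lemma Msum_ex k t P : Msum k t P =
  (\sum_(M : {set E} | is_matching M) \sum_(j < t.+1 | P j) ('C(k + j, k) * 'C(#|Ys M|, k + j)))%N.
Proof. rewrite /Msum exchange_big /=; apply: eq_bigr => j _; by rewrite /mom big_distrr. Qed.

Lemma Ycount_sum k : Ycount k = (\sum_(M : {set E} | is_matching M) (#|Ys M| == k : nat))%N.
Proof.
rewrite /Ycount card_sum [RHS]big_mkcond /=; apply: eq_bigr => M _; by case: (is_matching M).
Qed.

Lemma bonf_sum_even k t : ~~ odd t -> (Ycount k + Msum k t odd <= Msum k t (fun j => ~~ odd j))%N.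
Proof.
move=> ht; rewrite Ycount_sum !Msum_ex -big_split /=; apply: leq_sum => M _; exact: bonf_even.
Qed.

Lemma bonf_sum_odd k t : odd t -> (Msum k t (fun j => ~~ odd j) <= Ycount k + Msum k t odd)%N.
Proof.
move=> ht; rewrite Ycount_sum !Msum_ex -big_split /=; apply: leq_sum => M _; exact: bonf_odd.
Qed.

End BS.

Lemma I1 V n r : (2 * r + 2 <= n)%N ->
  (V ^_ r.+1 * dfact (n - 2 * r.+1) * ((2 * (n - 2 * r - 2) + 1) * (2 * (n - 2 * r - 1) + 1)) =
   V ^_ r * dfact (n - 2 * r) * (V - r))%N.
Proof.
move=> h; rewrite ffactnSr.
have -> : (n - 2 * r = (n - 2 * r.+1).+2)%N by lia.
rewrite !dfactS ?subSS ?subn0 ?subn1 ?subn2 /=.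
lia.
Qed.

Lemma I2 n r : (2 * r + 1 <= n)%N ->
  dfact (n - 2 * r) = (dfact (n - 2 * r - 1) * (2 * (n - 2 * r - 1) + 1))%N.
Proof. move=> h; rewrite -dfactS; congr dfact; lia. Qed.

Lemma I3 n s : (2 * s + 4 <= n)%N ->
  dfact (n - 2 * s) = (dfact (n - 2 * s.+2) * ((2 * (n - 2 * s - 4) + 1) * (2 * (n - 2 * s - 3) + 1)
     * (2 * (n - 2 * s - 2) + 1) * (2 * (n - 2 * s - 1) + 1)))%N.
Proof.
move=> h; set m := (n - 2 * s.+2)%N.
have -> : (n - 2 * s - 4 = m)%N by rewrite /m; lia.
have -> : (n - 2 * s - 3 = m.+1)%N by rewrite /m; lia.
have -> : (n - 2 * s - 2 = m.+2)%N by rewrite /m; lia.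
have -> : (n - 2 * s - 1 = m.+3)%N by rewrite /m; lia.
have -> : (n - 2 * s = m.+4)%N by rewrite /m; lia.
rewrite !dfactS; lia.
Qed.

Lemma I4 n : (3 <= n)%N ->
  dfact n = (dfact (n - 3) * ((2 * (n - 3) + 1) * (2 * (n - 2) + 1) * (2 * (n - 1) + 1)))%N.
Proof.
move=> h; set m := (n - 3)%N.
have -> : (n - 2 = m.+1)%N by rewrite /m; lia.
have -> : (n - 1 = m.+2)%N by rewrite /m; lia.
have {1}-> : n = m.+3 by rewrite /m; lia.
rewrite !dfactS; lia.
Qed.

Lemma dfact_gt0 m : (0 < dfact m)%N.
Proof. elim: m => [|m IH]; first by rewrite /dfact big_ord0. rewrite dfactS muln_gt0 IH; lia. Qed.

Unset Implicit Arguments.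
Open Scope R_scope.


Lemma INR_muln (a b : nat) : INR (a * b)%nat = INR a * INR b. Proof. exact: mult_INR. Qed.
Lemma INR_addn (a b : nat) : INR (a + b)%nat = INR a + INR b. Proof. exact: plus_INR. Qed.
Lemma INR_subn (a b : nat) : (b <= a)%nat -> INR (a - b)%nat = INR a - INR b.
Proof. move/leP => h; exact: minus_INR h. Qed.

Lemma INR_2m1 (m : nat) : INR (2 * m + 1)%nat = 2 * INR m + 1.
Proof. rewrite INR_addn INR_muln /=; ring. Qed.
Lemma INR_2m (m : nat) : INR (2 * m)%nat = 2 * INR m.
Proof. rewrite INR_muln /=; ring. Qed.

Lemma ev_gt (K : R) : eventually (fun n => K < INR n).
Proof. exact: (proj2 (is_lim_seq_spec INR p_infty) is_lim_seq_INR K). Qed.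

Lemma ev_of (P : nat -> Prop) (K : R) (N : nat) :
  (forall n, (N <= n)%nat -> K < INR n -> P n) -> eventually P.
Proof.
move=> H; case: (ev_gt K) => N1 H1; exists (maxn N N1) => n hn.
apply: H; first by move/leP: hn; lia.
apply: H1; move/leP: hn => hn; apply/leP; lia.
Qed.

Lemma y_lim : is_lim_seq (fun n => / INR n) 0.
Proof. exact: (is_lim_seq_inv INR p_infty is_lim_seq_INR). Qed.

Lemma lim_lin c a : is_lim_seq (fun n => (INR n - c) / (2 * INR n - a)) (1/2).
Proof.
apply: (is_lim_seq_ext_loc (fun n => (1 - c * / INR n) / (2 - a * / INR n))).
  apply: (@ev_of _ (Rabs a + 1) 0) => n _ h.
  have h1 : 0 < INR n by move: (Rabs_pos a); lra.
  have h2 : 0 < 2 * INR n - a by move: (Rle_abs a); lra.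
  field; split; lra.
have H1 := is_lim_seq_minus' _ _ _ _ (is_lim_seq_const 1) (is_lim_seq_mult' _ _ _ _ (is_lim_seq_const c) y_lim).
have H2 := is_lim_seq_minus' _ _ _ _ (is_lim_seq_const 2) (is_lim_seq_mult' _ _ _ _ (is_lim_seq_const a) y_lim).
have := is_lim_seq_div' _ _ _ _ H1 H2 ltac:(lra).
by rewrite (_ : (1 - c * 0) / (2 - a * 0) = 1 / 2); last by field.
Qed.

Lemma lim_invlin a : is_lim_seq (fun n => / (2 * INR n - a)) 0.
Proof.
apply: (is_lim_seq_ext_loc (fun n => (/ INR n) / (2 - a * / INR n))).
  apply: (@ev_of _ (Rabs a + 1) 0) => n _ h.
  have h1 : 0 < INR n by move: (Rabs_pos a); lra.
  have h2 : 0 < 2 * INR n - a by move: (Rle_abs a); lra.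
  field; split; lra.
have H2 := is_lim_seq_minus' _ _ _ _ (is_lim_seq_const 2) (is_lim_seq_mult' _ _ _ _ (is_lim_seq_const a) y_lim).
have := is_lim_seq_div' _ _ _ _ y_lim H2 ltac:(lra).
by rewrite (_ : 0 / (2 - a * 0) = 0); last by field.
Qed.

Definition Vn n := #|Vset n|.
Definition h r n := INR (Vn n ^_ r * dfact (n - 2 * r)) / INR (dfact n).
Definition g r n := INR (Vn n - r) / INR ((2 * (n - 2 * r - 2) + 1) * (2 * (n - 2 * r - 1) + 1)).

Lemma INR_V n : (2 <= n)%nat -> INR (Vn n) = (INR n - 1) * (2 * INR n - 3).
Proof.
move=> hn; rewrite /Vn card_valid -subn1 INR_muln INR_subn; last lia.
rewrite INR_subn; last lia. rewrite INR_muln /=. ring.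
Qed.

Lemma dfact_INR_pos m : 0 < INR (dfact m).
Proof. apply: lt_0_INR; apply/ltP; exact: dfact_gt0. Qed.

Lemma g_lim r : is_lim_seq (g r) (1/2).
Proof.
apply: (is_lim_seq_ext_loc (fun n => ((INR n - 1) / (2 * INR n - (4 * INR r + 3))) *
   ((INR n - 3/2) / (2 * INR n - (4 * INR r + 1))) * 2 -
   INR r * (/ (2 * INR n - (4 * INR r + 3))) * (/ (2 * INR n - (4 * INR r + 1))))).
  apply: (@ev_of _ 0 (2 * r + 3)) => n hn _.
  have hV : (r <= Vn n)%nat by rewrite /Vn card_valid; nia.
  have hx : INR (2 * r + 3) <= INR n by apply: le_INR; apply/leP.
  rewrite INR_addn INR_muln /= in hx.
  rewrite /g INR_subn // INR_V; last lia.
  rewrite INR_muln !INR_2m1.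
  rewrite (INR_subn (n - 2 * r) 2); last lia.
  rewrite (INR_subn (n - 2 * r) 1); last lia.
  rewrite INR_subn; last lia.
  rewrite INR_2m /=.
  field; split; lra.
have L1 := lim_lin 1 (4 * INR r + 3).
have L2 := lim_lin (3/2) (4 * INR r + 1).
have L3 := lim_invlin (4 * INR r + 3).
have L4 := lim_invlin (4 * INR r + 1).
have A := is_lim_seq_mult' _ _ _ _ (is_lim_seq_mult' _ _ _ _ L1 L2) (is_lim_seq_const 2).
have B := is_lim_seq_mult' _ _ _ _ (is_lim_seq_mult' _ _ _ _ (is_lim_seq_const (INR r)) L3) L4.
have := is_lim_seq_minus' _ _ _ _ A B.
by rewrite (_ : 1 / 2 * (1 / 2) * 2 - INR r * 0 * 0 = 1 / 2); last by field.
Qed.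

Lemma INR_expn (a b : nat) : INR (a ^ b)%nat = INR a ^ b.
Proof. elim: b => [|b IH]; first by rewrite expn0. by rewrite expnS INR_muln IH. Qed.

Lemma fact_INR_pos m : 0 < INR (m`!).
Proof. apply: lt_0_INR; apply/ltP; exact: fact_gt0. Qed.

Lemma h_lim r : is_lim_seq (h r) ((1/2)^r).
Proof.
elim: r => [|r IH].
  apply: (is_lim_seq_ext (fun _ => 1)); last by rewrite pow_O; exact: is_lim_seq_const.
  move=> n; rewrite /h ffactn0 mul1n muln0 subn0; have := dfact_INR_pos n; move=> hp; field; lra.
apply: (is_lim_seq_ext_loc (fun n => h r n * g r n)).
  apply: (@ev_of _ 0 (2 * r + 3)) => n hn _.
  have e' : INR (Vn n ^_ r.+1 * dfact (n - 2 * r.+1)) *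
            INR ((2 * (n - 2 * r - 2) + 1) * (2 * (n - 2 * r - 1) + 1)) =
            INR (Vn n ^_ r * dfact (n - 2 * r)) * INR (Vn n - r).
    by rewrite -!INR_muln I1 //; lia.
  have pD : 0 < INR ((2 * (n - 2 * r - 2) + 1) * (2 * (n - 2 * r - 1) + 1)).
    apply: lt_0_INR; apply/ltP; rewrite muln_gt0; lia.
  have pd := dfact_INR_pos n.
  rewrite /h /g.
  rewrite (_ : INR (Vn n ^_ r.+1 * dfact (n - 2 * r.+1)) =
     INR (Vn n ^_ r * dfact (n - 2 * r)) * INR (Vn n - r) /
     INR ((2 * (n - 2 * r - 2) + 1) * (2 * (n - 2 * r - 1) + 1))).
    field; split; lra.
  apply: (Rmult_eq_reg_r (INR ((2 * (n - 2 * r - 2) + 1) * (2 * (n - 2 * r - 1) + 1)))); last lra.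
  rewrite e'; field; lra.
have := is_lim_seq_mult' _ _ _ _ IH (g_lim r).
by rewrite (_ : (1 / 2) ^ r * (1 / 2) = (1/2) ^ r.+1) //= Rmult_comm.
Qed.

Definition U r n := INR ('C(Vn n, r) * dfact (n - 2 * r)) / INR (dfact n).
Definition L1 r n := INR ('C(Vn n, r) * (r * dfact (n - 2 * r - 1))) / INR (dfact n).
Definition L2 r n := INR ((1 < r) * (224 * n ^ 3 * 'C(Vn n, r - 2)) * dfact (n - 2 * r)) / INR (dfact n).

Lemma U_lim r : is_lim_seq (U r) ((1/2)^r / INR (r`!)).
Proof.
apply: (is_lim_seq_ext (fun n => h r n / INR (r`!))).
  move=> n; rewrite /h /U -bin_ffact mulnAC INR_muln.
  have := dfact_INR_pos n; have := fact_INR_pos r; move=> h1 h2; field; lra.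
apply: is_lim_seq_div' (h_lim r) (is_lim_seq_const _) _.
have := fact_INR_pos r; lra.
Qed.

Lemma L1_lim r : is_lim_seq (L1 r) 0.
Proof.
apply: (is_lim_seq_ext_loc (fun n => INR r / INR (r`!) * h r n * / (2 * INR n - (4 * INR r + 1)))).
  apply: (@ev_of _ 0 (2 * r + 1)) => n hn _.
  have hx : INR (2 * r + 1) <= INR n by apply: le_INR; apply/leP.
  rewrite INR_2m1 in hx.
  rewrite /h /L1 -bin_ffact (I2 hn) !INR_muln INR_2m1.
  rewrite (INR_subn (n - 2 * r) 1); last lia.
  rewrite INR_subn; last lia.
  rewrite INR_2m /=.
  have := dfact_INR_pos n; have := fact_INR_pos r; have := dfact_INR_pos (n - 2 * r - 1).
  move=> h1 h2 h3; field; lra.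
have := is_lim_seq_mult' _ _ _ _ (is_lim_seq_mult' _ _ _ _ (is_lim_seq_const (INR r / INR (r`!))) (h_lim r))
   (lim_invlin (4 * INR r + 1)).
by rewrite Rmult_0_r.
Qed.

Lemma L2_lim r : is_lim_seq (L2 r) 0.
Proof.
case: r => [|[|s]].
- apply: (is_lim_seq_ext (fun _ => 0)); last exact: is_lim_seq_const.
  by move=> n; rewrite /L2 /= Rdiv_0_l.
- apply: (is_lim_seq_ext (fun _ => 0)); last exact: is_lim_seq_const.
  by move=> n; rewrite /L2 /= Rdiv_0_l.
apply: (is_lim_seq_ext_loc (fun n => 224 / INR (s`!) * h s n *
   ((INR n - 0) / (2 * INR n - (4 * INR s + 7))) *
   ((INR n - 0) / (2 * INR n - (4 * INR s + 5))) *
   ((INR n - 0) / (2 * INR n - (4 * INR s + 3))) *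
   / (2 * INR n - (4 * INR s + 1)))).
  apply: (@ev_of _ 0 (2 * s + 4)) => n hn _.
  have hx : INR (2 * s + 4) <= INR n by apply: le_INR; apply/leP.
  rewrite INR_addn INR_muln /= in hx.
  rewrite /h /L2 /= subn2 /= mul1n -bin_ffact (I3 hn).
  rewrite !INR_muln !INR_2m1 ?INR_expn (INR_IZR_INZ 224).
  rewrite (INR_subn (n - 2 * s) 4); last lia.
  rewrite (INR_subn (n - 2 * s) 3); last lia.
  rewrite (INR_subn (n - 2 * s) 2); last lia.
  rewrite (INR_subn (n - 2 * s) 1); last lia.
  rewrite INR_subn; last lia.
  rewrite INR_2m /=.
  have := dfact_INR_pos n; have := fact_INR_pos s; have := dfact_INR_pos (n - 2 * s.+2).
  move=> h1 h2 h3; field; repeat split; lra.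
have A := is_lim_seq_mult' _ _ _ _ (is_lim_seq_const (224 / INR (s`!))) (h_lim s).
have B := is_lim_seq_mult' _ _ _ _ A (lim_lin 0 (4 * INR s + 7)).
have C := is_lim_seq_mult' _ _ _ _ B (lim_lin 0 (4 * INR s + 5)).
have D := is_lim_seq_mult' _ _ _ _ C (lim_lin 0 (4 * INR s + 3)).
have := is_lim_seq_mult' _ _ _ _ D (lim_invlin (4 * INR s + 1)).
by rewrite Rmult_0_r.
Qed.

Lemma mom_lb' p n r : ('C(Vn n, r) * dfact (n - 2 * r) <=
  mom p n r + 'C(Vn n, r) * (r * dfact (n - 2 * r - 1)) +
  (1 < r) * (224 * n ^ 3 * 'C(Vn n, r - 2)) * dfact (n - 2 * r))%N.
Proof.
apply: leq_trans (mom_lb p n r) _; rewrite leq_add2l.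
apply: leq_mul => //; apply: leq_trans (badc_le n r) _.
apply: leq_mul => //; apply: leq_mul => //; exact: conf_le.
Qed.

Lemma mom_lim p r : is_lim_seq (fun n => INR (mom p n r) / INR (dfact n)) ((1/2)^r / INR (r`!)).
Proof.
apply: (is_lim_seq_le_le (fun n => U r n - L1 r n - L2 r n) _ (U r)).
  move=> n; have pd := dfact_INR_pos n; split.
  - rewrite /U /L1 /L2.
    have := le_INR _ _ (elimT leP (mom_lb' p n r)).
    rewrite !INR_addn => hle.
    apply: (Rmult_le_reg_r (INR (dfact n))) => //.
    rewrite /Rdiv !Rmult_minus_distr_r !Rmult_assoc !Rinv_l; try lra.
  - rewrite /U; apply: (Rmult_le_reg_r (INR (dfact n))) => //.
    rewrite /Rdiv !Rmult_assoc !Rinv_l; try lra.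
    rewrite !Rmult_1_r; apply: le_INR; apply/leP; exact: mom_ub.
  have := is_lim_seq_minus' _ _ _ _ (is_lim_seq_minus' _ _ _ _ (U_lim r) (L1_lim r)) (L2_lim r).
  by rewrite !Rminus_0_r.
exact: U_lim.
Qed.

Lemma xy_lim p : is_lim_seq (fun n => INR #|xyb p n| / INR (dfact n)) 0.
Proof.
apply: (is_lim_seq_le_le (fun _ => 0) _ (fun n => INR (4 * n ^ 2 * dfact (n - 3)) / INR (dfact n))).
  move=> n; have pd := dfact_INR_pos n; split.
    apply: Rdiv_le_0_compat; [exact: pos_INR | lra].
  apply: Rmult_le_compat_r; first by apply: Rlt_le; apply: Rinv_0_lt_compat.
  apply: le_INR; apply/leP; exact: xyb_le.
  exact: is_lim_seq_const.
apply: (is_lim_seq_ext_loc (fun n => 4 * ((INR n - 0) / (2 * INR n - 5)) * ((INR n - 0) / (2 * INR n - 3)) *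
   / (2 * INR n - 1))).
  apply: (@ev_of _ 0 3) => n hn _.
  have hx : INR 3 <= INR n by apply: le_INR; apply/leP.
  rewrite (I4 hn) !INR_muln !INR_2m1 ?INR_expn.
  rewrite INR_subn; last lia.
  rewrite INR_subn; last lia.
  rewrite INR_subn; last lia.
  have := dfact_INR_pos (n - 3); simpl in hx |- *; move=> h1; field; repeat split; lra.
have A := is_lim_seq_mult' _ _ _ _ (is_lim_seq_const 4) (lim_lin 0 5).
have B := is_lim_seq_mult' _ _ _ _ A (lim_lin 0 3).
have := is_lim_seq_mult' _ _ _ _ B (lim_invlin 1).
by rewrite Rmult_0_r.
Qed.


Lemma fact_eqn j : Factorial.fact j = j`!.
Proof. elim: j => [|j IH] //=; rewrite factS IH; lia. Qed.

Definition cS k t := sum_f_R0 (fun i => / INR (Factorial.fact i) * (- (1/2)) ^ i) t * ((1/2)^k / INR (k`!)).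

Definition Dt p k t n := (INR (Msum p n k t (fun j => ~~ odd j)) - INR (Msum p n k t odd)) / INR (dfact n).

Lemma Msum_S p n k t (P : pred nat) :
  Msum p n k t.+1 P = (Msum p n k t P + P t.+1 * ('C(k + t.+1, k) * mom p n (k + t.+1)))%N.
Proof. rewrite /Msum big_mkcond big_ord_recr /= -big_mkcond /=; by case: (P t.+1); rewrite ?mul1n ?mul0n. Qed.

Lemma m1pow t : (-1)^t = if odd t then -1 else 1.
Proof. elim: t => [|t IH] /=; first by []. rewrite IH; case: (odd t) => /=; ring. Qed.

Lemma Msum_0 p n k (P : pred nat) :
  Msum p n k 0 P = (P 0%N * ('C(k + 0, k) * mom p n (k + 0)))%N.
Proof. rewrite /Msum big_mkcond big_ord_recr big_ord0 /=; by case: (P 0%N); rewrite ?mul1n ?mul0n. Qed.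

Lemma coef_id k j : INR ('C(k + j, k)) * ((1/2)^(k + j) / INR ((k + j)`!)) =
  (1/2)^k / INR (k`!) * ((1/2)^j / INR (Factorial.fact j)).
Proof.
have e := @bin_fact (k + j) k (leq_addr _ _).
have ej : (k + j - k = j)%N by lia.
rewrite ej in e.
rewrite fact_eqn.
have e' : INR ('C(k + j, k)) * (INR (k`!) * INR (j`!)) = INR ((k + j)`!) by rewrite -!INR_muln e.
have h1 := fact_INR_pos k; have h2 := fact_INR_pos j; have h3 := fact_INR_pos (k + j).
have h4 : 0 < INR 'C(k + j, k) by apply: lt_0_INR; apply/ltP; rewrite bin_gt0 leq_addr.
rewrite -e' pow_add; field; repeat split; lra.
Qed.

Lemma Dt_lim p k t : is_lim_seq (Dt p k t) (cS k t).
Proof.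
elim: t => [|t IH].
  apply: (is_lim_seq_ext (fun n => INR ('C(k + 0, k)) * (INR (mom p n (k + 0)) / INR (dfact n)))).
    move=> n; rewrite /Dt !Msum_0 /= ?mul1n ?mul0n !INR_muln /=.
    rewrite /Rdiv; ring.
  have := is_lim_seq_mult' _ _ _ _ (is_lim_seq_const (INR ('C(k + 0, k)))) (mom_lim p (k + 0)).
  rewrite coef_id /cS /= => H.
  rewrite (_ : / 1 * 1 * ((1 / 2) ^ k / INR k`!) = (1 / 2) ^ k / INR k`! * (1 / 1)) //.
  have := fact_INR_pos k => hk; field; lra.
apply: (is_lim_seq_ext (fun n => Dt p k t n + (-1)^(t.+1) * (INR ('C(k + t.+1, k)) * (INR (mom p n (k + t.+1)) / INR (dfact n))))).
  move=> n; rewrite /Dt !Msum_S !INR_addn !INR_muln /=.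
  rewrite m1pow /=; case: (odd t) => /=; rewrite /Rdiv; simpl; ring.
have := is_lim_seq_plus' _ _ _ _ IH (is_lim_seq_mult' _ _ _ _ (is_lim_seq_const ((-1)^t.+1))
   (is_lim_seq_mult' _ _ _ _ (is_lim_seq_const (INR ('C(k + t.+1, k)))) (mom_lim p (k + t.+1)))).
rewrite coef_id /cS /= => H.
rewrite (_ : (sum_f_R0 (fun i : nat => / INR (Factorial.fact i) * (- (1 / 2)) ^ i) t +
      / INR (Factorial.fact t.+1) * (- (1 / 2) * (- (1 / 2)) ^ t)) * ((1 / 2) ^ k / INR k`!) =
  sum_f_R0 (fun i : nat => / INR (Factorial.fact i) * (- (1 / 2)) ^ i) t * ((1 / 2) ^ k / INR k`!) +
    (-1) ^ t.+1 * ((1 / 2) ^ k / INR k`! * ((1 / 2) ^ t.+1 / INR (Factorial.fact t.+1)))).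
  exact: H.
have e : (- (1/2))^t = (-1)^t * (1/2)^t by rewrite -Rpow_mult_distr; congr (_ ^ _); ring.
change ((1/2)^t.+1) with (1/2 * (1/2)^t); change ((-1)^t.+1) with (-1 * (-1)^t).
rewrite e.
have := fact_INR_pos k; have := INR_fact_lt_0 t.+1; move=> h1 h2. field; lra.
Qed.

Lemma div_le (a b d : R) : 0 < d -> a <= b -> a / d <= b / d.
Proof. move=> hd hab; apply: Rmult_le_compat_r => //; apply: Rlt_le; exact: Rinv_0_lt_compat. Qed.

Lemma cv_get (u : nat -> R) (l eps : R) : is_lim_seq u l -> 0 < eps ->
  exists N, forall n, (N <= n)%nat -> Rabs (u n - l) < eps.
Proof.
move/is_lim_seq_Reals => H he; case: (H eps he) => N HN; exists N => n hn.
apply: HN; exact/leP.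
Qed.

Arguments cv_get {u l eps}.

Theorem corollary4 (p : pattern) (k : nat) :
  Un_cv (fun n : nat => INR (a_count p n k) / INR (dfact n))
        (exp (- (1 / 2)) / (2 ^ k * INR (fact k))).
Proof.
set c := (1/2)^k / INR (k`!).
have hk := fact_INR_pos k.
have cpos : 0 < c by rewrite /c; apply: Rdiv_lt_0_compat => //; apply: pow_lt; lra.
have Lval : exp (- (1 / 2)) / (2 ^ k * INR (fact k)) = c * exp (- (1 / 2)).
  have h2 : 0 < 2 ^ k by apply: pow_lt; lra.
  have hp : (1/2)^k * 2^k = 1.
    by rewrite -Rpow_mult_distr (_ : 1/2 * 2 = 1) ?pow1 //; field.
  rewrite /c fact_eqn (_ : (1/2)^k = / 2^k); first by field; lra.
  apply: (Rmult_eq_reg_r (2^k)); last lra.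
  by rewrite hp Rinv_l //; lra.
rewrite Lval.
have Hexp : infinite_sum (fun i => / INR (Factorial.fact i) * (- (1/2)) ^ i) (exp (- (1/2))) :=
  proj2_sig (exist_exp (- (1/2))).
move=> eps epos.
have e3 : 0 < eps / 3 by lra.
have e3c : 0 < eps / (3 * c) by apply: Rdiv_lt_0_compat; lra.
case: (Hexp _ e3c) => T HT.
pose t0 := (2 * T)%nat; pose t1 := (2 * T).+1.
have o0 : ~~ odd t0 by rewrite /t0 oddM.
have o1 : odd t1 by rewrite /t1 /= oddM.
have S0 := HT t0 ltac:(rewrite /t0; lia).
have S1 := HT t1 ltac:(rewrite /t1; lia).
rewrite /Rdist in S0 S1.
case: (cv_get (Dt_lim p k t0) e3) => N0 H0.
case: (cv_get (Dt_lim p k t1) e3) => N1 H1.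
case: (cv_get (xy_lim p) e3) => N2 H2.
exists (N0 + N1 + N2)%nat => n hn.
move/leP: hn => hn.
have := H0 n ltac:(lia); have := H1 n ltac:(lia); have := H2 n ltac:(lia).
move=> /Rabs_def2 [x1 x2] /Rabs_def2 [y1 y2] /Rabs_def2 [z1 z2].
have pd := dfact_INR_pos n.
have d1 : INR (a_count p n k) / INR (dfact n) <=
    INR (Ycount p n k) / INR (dfact n) + INR #|xyb p n| / INR (dfact n).
  rewrite -Rdiv_plus_distr; apply: div_le => //; rewrite -INR_addn; apply: le_INR; apply/leP; exact: a_le.
have d2 : INR (Ycount p n k) / INR (dfact n) <=
    INR (a_count p n k) / INR (dfact n) + INR #|xyb p n| / INR (dfact n).
  rewrite -Rdiv_plus_distr; apply: div_le => //; rewrite -INR_addn; apply: le_INR; apply/leP; exact: a_ge.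
have d3 : INR (Ycount p n k) / INR (dfact n) <= Dt p k t0 n.
  rewrite /Dt; apply: div_le => //.
  have := le_INR _ _ (elimT leP (bonf_sum_even p n k o0)); rewrite INR_addn; lra.
have d4 : Dt p k t1 n <= INR (Ycount p n k) / INR (dfact n).
  rewrite /Dt; apply: div_le => //.
  have := le_INR _ _ (elimT leP (bonf_sum_odd p n k o1)); rewrite INR_addn; lra.
have c0 : Rabs (cS k t0 - c * exp (- (1 / 2))) < eps / 3.
  rewrite /cS -/c (_ : _ - _ = c * (sum_f_R0 (fun i => / INR (Factorial.fact i) * (- (1/2)) ^ i) t0 - exp (- (1/2)))); last ring.
  rewrite Rabs_mult Rabs_pos_eq; last lra.
  apply: (Rlt_le_trans _ (c * (eps / (3 * c)))); first by apply: Rmult_lt_compat_l.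
  right; field; lra.
have c1 : Rabs (cS k t1 - c * exp (- (1 / 2))) < eps / 3.
  rewrite /cS -/c (_ : _ - _ = c * (sum_f_R0 (fun i => / INR (Factorial.fact i) * (- (1/2)) ^ i) t1 - exp (- (1/2)))); last ring.
  rewrite Rabs_mult Rabs_pos_eq; last lra.
  apply: (Rlt_le_trans _ (c * (eps / (3 * c)))); first by apply: Rmult_lt_compat_l.
  right; field; lra.
move: c0 c1 => /Rabs_def2 [w1 w2] /Rabs_def2 [v1 v2].
rewrite /Rdist; apply: Rabs_def1; lra.
Qed.
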